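(* Let $K\subset\mathbb{R}^n$ be a closed convex set. The map $\sigma\mapsto\overline{\varepsilon_K}(\sigma)$ is non-decreasing on $[0,\infty)$. If $c\ge1$, then $\overline{\varepsilon_K}(\sigma)\le\overline{\varepsilon_K}(c\sigma)\le c\,\overline{\varepsilon_K}(\sigma)$. If $c<1$, then $c\,\overline{\varepsilon_K}(\sigma)\le\overline{\varepsilon_K}(c\sigma)\le\overline{\varepsilon_K}(\sigma)$.
   Context: Local Gaussian width $w_\mu(\varepsilon)=\mathbb{E}\sup_{t\in B(\mu,\varepsilon)\cap K}\langle x,t\rangle$, $x\sim N(0,\mathbb{I}_n)$, $B$ the closed Euclidean ball. For $\sigma\ge0$ and $\mu\in K$, $\varepsilon_\mu(\sigma)=\operatorname{argmax}_{\varepsilon\ge0}[\sigma w_\mu(\varepsilon)-\varepsilon^2/2]$, and $\overline{\varepsilon_K}(\sigma)=\sup_{\mu\in K}\varepsilon_\mu(\sigma)$. *)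

(* Defs.v *)
From HB Require Import structures.
From mathcomp Require Import all_boot all_order all_algebra.
From mathcomp Require Import all_classical all_reals all_analysis.
Set Implicit Arguments. Unset Strict Implicit. Unset Printing Implicit Defensive.
Import Order.TTheory GRing.Theory Num.Theory.
Import numFieldTopology.Exports numFieldNormedType.Exports.
Local Open Scope classical_set_scope.
Local Open Scope ring_scope.

Definition inner {R : realType} {n : nat} (x t : 'rV[R]_n) : R :=
  \sum_(i < n) x 0 i * t 0 i.

Definition eball {R : realType} {n : nat} (mu : 'rV[R]_n) (eps : R) : set 'rV[R]_n :=
  [set t | 0 <= eps /\ \sum_(i < n) (t 0 i - mu 0 i) ^+ 2 <= eps ^+ 2].

(* Expectation under the standard Gaussian N(0, I_n) on R^n, as the iterated
   integral against the standard normal probability on each coordinate. *)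
Fixpoint gauss_exp {R : realType} (n : nat) : ('rV[R]_n -> \bar R) -> \bar R :=
  match n return ('rV[R]_n -> \bar R) -> \bar R with
  | 0 => fun f => f 0
  | m.+1 => fun f =>
      (\int[normal_prob (0:R) 1]_t
         gauss_exp (fun v : 'rV[R]_m => f (castmx (erefl, add1n m) (row_mx (\row_(_ < 1) t) v))))%E
  end.

Definition local_gw {R : realType} {n : nat} (K : set 'rV[R]_n) (mu : 'rV[R]_n) (eps : R)
  : \bar R :=
  gauss_exp (fun x : 'rV[R]_n => (sup [set inner x t | t in eball mu eps `&` K])%:E).

Definition is_eps_mu {R : realType} {n : nat} (K : set 'rV[R]_n) (mu : 'rV[R]_n)
  (sigma eps : R) : Prop :=
  0 <= eps /\
  forall e : R, 0 <= e ->
    (sigma%:E * local_gw K mu e - (e ^+ 2 / 2)%:E <=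
     sigma%:E * local_gw K mu eps - (eps ^+ 2 / 2)%:E)%E.

Definition eps_bar {R : realType} {n : nat} (K : set 'rV[R]_n) (sigma : R) : R :=
  sup [set e | exists2 mu, K mu & is_eps_mu K mu sigma e].

(* Main.v *)
Require Import Defs.
From HB Require Import structures.
From mathcomp Require Import all_boot all_order all_algebra.
From mathcomp Require Import all_classical all_reals all_analysis.
From mathcomp Require Import ring lra.
From mathcomp Require Import measurable_realfun.
Import Order.TTheory GRing.Theory Num.Theory.
Import numFieldTopology.Exports numFieldNormedType.Exports.
Local Open Scope classical_set_scope.
Local Open Scope ring_scope.

Section N1.
Context {R : realType}.
Local Notation mu := (@lebesgue_measure R).
Local Notation N := (normal_prob (0:R) 1).

Lemma abs_le_expR (t : R) : `|t| <= expR (t ^+ 2 / 4).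
Proof.
apply: le_trans (expR_ge1Dx _).
have h : 0 <= (`|t| - 2) ^+ 2 / 4 by rewrite divr_ge0// sqr_ge0.
have e : t ^+ 2 = `|t| ^+ 2 by rewrite real_normK ?num_real.
rewrite e; move: h; set a := `|t|.
move=> h. have : (a - 2) ^+ 2 / 4 = a ^+ 2 / 4 + 1 - a by field.
lra.
Qed.

Lemma N1_bound (t : R) :
  `|t| * normal_pdf 0 1 t <= normal_peak 1 * normal_fun 0 (Num.sqrt 2) t.
Proof.
rewrite /normal_pdf oner_eq0 /= /normal_fun !subr0.
rewrite mulrCA ler_pM2l ?normal_peak_gt0 ?oner_eq0//.
rewrite sqr_sqrtr ?ler0n// expr1n.
apply: le_trans (ler_wpM2r (expR_ge0 _) (abs_le_expR t)) _.
rewrite -expRD; have -> : t ^+ 2 / 4 + - t ^+ 2 / 2 = - t ^+ 2 / (2 *+ 2) by rewrite mulr2n; field.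
by [].
Qed.


Lemma mabsE : measurable_fun setT (fun t : R => (`|t|)%:E).
Proof. by apply/measurable_EFinP; exact: normr_measurable. Qed.

Lemma N1 : N.-integrable setT (fun t => (`|t|)%:E).
Proof.
apply/integrableP; split; first exact: mabsE.
have -> : (\int[N]_(x in setT) `|(`|x|)%:E| = \int[N]_(x in setT) (`|x|)%:E)%E.
  by apply: eq_integral => x _ /=; rewrite normr_id.
rewrite -(Radon_Nikodym_SigmaFinite.change_of_variables (normal_prob_dominates 0 1)) //; last first.
  exact: mabsE.
set F := Radon_Nikodym_SigmaFinite.f _ _.
have aeF : ae_eq mu setT F (fun t => (normal_pdf 0 1 t)%:E).
  apply: integral_ae_eq => //.
  - exact: Radon_Nikodym_SigmaFinite.f_integrable (normal_prob_dominates 0 1).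
  - by apply/measurable_EFinP; exact: measurable_normal_pdf.
  - move=> E _ mE.
    by rewrite -Radon_Nikodym_SigmaFinite.f_integral //; exact: normal_prob_dominates.
have -> : (\int[mu]_x (`|x|%:E * F x) = \int[mu]_x (`|x|%:E * (normal_pdf 0 1 x)%:E))%E.
  apply: ae_eq_integral => //.
  - apply: emeasurable_funM; first exact: mabsE.
    exact: measurable_int (Radon_Nikodym_SigmaFinite.f_integrable (normal_prob_dominates 0 1)).
  - apply: emeasurable_funM; first exact: mabsE.
    by apply/measurable_EFinP; exact: measurable_normal_pdf.
  - exact: ae_eqe_mul2l.
have ib : mu.-integrable setT (fun t : R => (normal_peak 1 * normal_fun 0 (Num.sqrt 2) t)%:E).
  have sq0 : Num.sqrt (2:R) != 0 by rewrite sqrtr_eq0 -ltNge ltr0n.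
  have -> : (fun t : R => (normal_peak 1 * normal_fun 0 (Num.sqrt 2) t)%:E) =
     (fun t => ((normal_peak 1 / normal_peak (Num.sqrt 2))%:E * (normal_pdf 0 (Num.sqrt 2) t)%:E))%E.
    apply: funext => t; rewrite -EFinM; congr EFin.
    rewrite /normal_pdf (negbTE sq0) mulrA divfK //.
    by rewrite gt_eqF // normal_peak_gt0.
  apply: integrableZl => //; exact: integrable_normal_pdf.
have ib2 : mu.-integrable setT (fun t : R => (`|t|)%:E * (normal_pdf 0 1 t)%:E)%E.
  apply: le_integrable ib => //.
  - apply: emeasurable_funM; first exact: mabsE.
    by apply/measurable_EFinP; exact: measurable_normal_pdf.
  - move=> t _; rewrite -EFinM /= lee_fin (ger0_norm (mulr_ge0 (normr_ge0 t) (normal_pdf_ge0 0 1 t))).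
    rewrite (ger0_norm (mulr_ge0 (normal_peak_ge0 _) (normal_fun_ge0 _ _ _))).
    exact: N1_bound.
move/integrableP: ib2 => [_]; apply: le_lt_trans; apply: ge0_le_integral => //.
- move=> t _; rewrite -EFinM lee_fin mulr_ge0 ?normal_pdf_ge0 //.
- apply: emeasurable_funM; first exact: mabsE.
  by apply/measurable_EFinP; exact: measurable_normal_pdf.
- apply: measurableT_comp => //; apply: emeasurable_funM; first exact: mabsE.
  by apply/measurable_EFinP; exact: measurable_normal_pdf.
- by move=> t _; rewrite gee0_abs // -EFinM lee_fin mulr_ge0 ?normal_pdf_ge0.
Qed.

End N1.

Set Implicit Arguments. Unset Strict Implicit.
Section Gauss.
Context {R : realType}.
Local Notation N := (normal_prob (0:R) 1).

Lemma lip_cont (g : R -> R) L : 0 <= L ->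
  (forall s t, `|g t - g s| <= L * `|t - s|) -> continuous g.
Proof.
move=> L0 h x; apply/cvgrPdist_le => /= e e0.
have L1 : 0 < L + 1 by rewrite ltr_wpDl.
near=> y.
apply: le_trans (h y x) _.
have hy : `|x - y| <= e / (L + 1).
  near: y; apply/nbhs_normP; exists (e / (L + 1)) => /=; first by rewrite divr_gt0.
  by move=> z /= hz; rewrite ltW.
apply: le_trans (ler_wpM2l L0 hy) _.
rewrite mulrA ler_pdivrMr //; nra.
Unshelve. all: by end_near.
Qed.

Definition dist1 {n} (x y : 'rV[R]_n) := \sum_(i < n) `|x 0 i - y 0 i|.
Definition Lip {n} (f : 'rV[R]_n -> R) :=
  exists L, 0 <= L /\ forall x y, `|f x - f y| <= L * dist1 x y.
Definition GE {n} (f : 'rV[R]_n -> R) : R := fine (@gauss_exp R n (fun x => (f x)%:E)).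
Definition glue {m} (t : R) (v : 'rV[R]_m) : 'rV[R]_m.+1 :=
  castmx (erefl, add1n m) (row_mx (\row_(_ < 1) t) v).

Lemma gauss_expS m (f : 'rV[R]_m.+1 -> \bar R) :
  @gauss_exp R m.+1 f = (\int[N]_t @gauss_exp R m (fun v => f (glue t v)))%E.
Proof. by []. Qed.

Lemma glue0 m t (v : 'rV[R]_m) : glue t v 0 ord0 = t.
Proof.
rewrite /glue castmxE /=.
have -> : cast_ord (esym (add1n m)) ord0 = lshift m (ord0 : 'I_1) by apply: val_inj.
by rewrite row_mxEl mxE.
Qed.

Lemma glueS m t (v : 'rV[R]_m) (i : 'I_m) : glue t v 0 (lift ord0 i) = v 0 i.
Proof.
rewrite /glue castmxE /=.
have -> : cast_ord (esym (add1n m)) (lift ord0 i) = rshift 1 i by apply: val_inj.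
by rewrite row_mxEr cast_ord_id.
Qed.

Lemma dist1_glue m t s (v w : 'rV[R]_m) :
  dist1 (glue t v) (glue s w) = `|t - s| + dist1 v w.
Proof.
rewrite /dist1 big_ord_recl !glue0; congr (_ + _).
by apply: eq_bigr => i _; rewrite !glueS.
Qed.

Lemma dist1_ge0 n (x y : 'rV[R]_n) : 0 <= dist1 x y.
Proof. by apply: sumr_ge0 => i _. Qed.

Lemma dist1_xx n (x : 'rV[R]_n) : dist1 x x = 0.
Proof. by rewrite /dist1 big1 // => i _; rewrite subrr normr0. Qed.

Lemma Lip_slice m (F : 'rV[R]_m.+1 -> R) t : Lip F -> Lip (fun v => F (glue t v)).
Proof.
move=> [L [L0 hL]]; exists L; split => // x y.
by apply: le_trans (hL _ _) _; rewrite dist1_glue subrr normr0 add0r.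
Qed.

Lemma Lip_lin n (f g : 'rV[R]_n -> R) a : Lip f -> Lip g -> Lip (fun x => a * f x + g x).
Proof.
move=> [L [L0 hL]] [M [M0 hM]]; exists (`|a| * L + M); split.
  by rewrite addr_ge0 // mulr_ge0.
move=> x y.
have -> : a * f x + g x - (a * f y + g y) = a * (f x - f y) + (g x - g y) by ring.
apply: le_trans (ler_normD _ _) _; rewrite normrM mulrDl -mulrA.
by apply: lerD; [apply: ler_wpM2l|].
Qed.

Lemma Lip_cst n c : Lip (fun _ : 'rV[R]_n => c).
Proof. by exists 0; split => // x y; rewrite subrr normr0 mul0r. Qed.

Definition GP n := [/\ forall f : 'rV[R]_n -> R, Lip f ->
      @gauss_exp R n (fun x => (f x)%:E) = (GE f)%:E,
  forall (f g : 'rV[R]_n -> R) a, Lip f -> Lip g -> GE (fun x => a * f x + g x) = a * GE f + GE g,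
  forall f : 'rV[R]_n -> R, Lip f -> (forall x, 0 <= f x) -> 0 <= GE f &
  forall c, GE (fun _ : 'rV[R]_n => c) = c].

Lemma GP0 : GP 0.
Proof. split => [f _|f g a _ _|f _ h|c] //; rewrite /GE /=; exact: h. Qed.

Lemma GE_abs n (h : 'rV[R]_n -> R) c : GP n -> Lip h -> (forall x, `|h x| <= c) ->
  `|GE h| <= c.
Proof.
move=> [_ lin pos cst] Lh hc.
have c1 : 0 <= GE (fun x => -1 * h x + c).
  apply: pos; first exact: Lip_lin (Lip_cst _ _).
  by move=> x; have := hc x; rewrite ler_norml; lra.
have c2 : 0 <= GE (fun x => 1 * h x + c).
  apply: pos; first exact: Lip_lin (Lip_cst _ _).
  by move=> x; have := hc x; rewrite ler_norml; lra.
rewrite lin ?cst in c1; last 2 first; [exact: Lh|exact: Lip_cst|].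
rewrite lin ?cst in c2; last 2 first; [exact: Lh|exact: Lip_cst|].
rewrite ler_norml; lra.
Qed.


Section Step.
Variable m : nat.
Hypothesis IH : GP m.

Definition gsl (F : 'rV[R]_m.+1 -> R) (t : R) : R := GE (fun v => F (glue t v)).

Lemma gsl_lip F L : 0 <= L -> (forall x y, `|F x - F y| <= L * dist1 x y) ->
  forall s t, `|gsl F t - gsl F s| <= L * `|t - s|.
Proof.
move=> L0 hL s t; have LF : Lip F by exists L.
have IH' := IH; case: IH' => [fin lin pos cst].
have -> : gsl F t - gsl F s = GE (fun v => -1 * F (glue s v) + F (glue t v)).
  by rewrite lin; [rewrite /gsl; ring|exact: Lip_slice|exact: Lip_slice].
apply: GE_abs => //; first by apply: Lip_lin; exact: Lip_slice.
move=> v; rewrite mulN1r addrC; apply: le_trans (hL _ _) _.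
by rewrite dist1_glue dist1_xx addr0.
Qed.

Lemma gsl_cont F : Lip F -> continuous (gsl F).
Proof.
move=> [L [L0 hL]]; apply: (@lip_cont _ L L0) => s t; exact: gsl_lip.
Qed.

Lemma gsl_int F : Lip F -> N.-integrable setT (EFin \o gsl F).
Proof.
move=> LF; have [L [L0 hL]] := LF.
have ib : N.-integrable setT (fun t : R => ((`|gsl F 0| + L * `|t|)%:E)).
  have ib0 : N.-integrable setT (fun t : R => ((`|gsl F 0|)%:E + L%:E * (`|t|)%:E)%E).
    apply: integrableD => //; first exact: (finite_measure_integrable_cst _ (`|gsl F 0|) measurableT).
    by apply: integrableZl => //; exact: N1.
  by apply: eq_integrable ib0 => // t _; rewrite EFinD EFinM.
apply: le_integrable ib => //.
  apply/measurable_EFinP; have := continuous_measurable_fun (gsl_cont LF); exact.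
move=> t _ /=; rewrite lee_fin [X in _ <= X]ger0_norm ?addr_ge0 ?mulr_ge0 //.
have := gsl_lip L0 hL 0 t; rewrite subr0 => h.
have := ler_normD (gsl F t - gsl F 0) (gsl F 0); rewrite subrK; lra.
Qed.

Lemma GEint F : Lip F ->
  @gauss_exp R m.+1 (fun x => (F x)%:E) = (\int[N]_t (gsl F t)%:E)%E.
Proof.
move=> LF; rewrite gauss_expS; apply: eq_integral => t _.
by case: IH => fin _ _ _; exact: fin (Lip_slice t LF).
Qed.

Lemma GPS : GP m.+1.
Proof.
have IH' := IH; case: IH' => [fin lin pos cst].
split.
- move=> F LF; rewrite /GE GEint // fineK //; exact: integrable_fin_num (gsl_int LF).
- move=> F G a LF LG; rewrite /GE !GEint //; last exact: Lip_lin.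
  have e t : gsl (fun x => a * F x + G x) t = a * gsl F t + gsl G t.
    by rewrite /gsl lin //; exact: Lip_slice.
  under eq_integral => t _ do rewrite e EFinD EFinM.
  rewrite integralD //; last 2 first.
    by apply: integrableZl => //; exact: gsl_int.
    exact: gsl_int.
  rewrite integralZl //; last exact: gsl_int.
  have fF := integrable_fin_num measurableT (gsl_int LF).
  have fG := integrable_fin_num measurableT (gsl_int LG).
  by rewrite fineD ?fin_numM // fineM.
- move=> F LF h; rewrite /GE GEint //; apply: fine_ge0; apply: integral_ge0 => t _.
  by rewrite lee_fin; apply: pos; [exact: Lip_slice|move=> v; exact: h].
- move=> c; rewrite /GE GEint ?Lip_cst //.
  under eq_integral => t _ do rewrite /gsl cst.
  rewrite integral_cst //.
  have h1 : (c%:E * N setT)%E = c%:E by rewrite probability_setT mule1.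
  exact: (congr1 fine h1).
exact: Lip_cst.
Qed.

End Step.

Lemma GPn n : GP n.
Proof. by elim: n => [|n IHn]; [exact: GP0|exact: GPS]. Qed.

End Gauss.


Section SupLemmas.
Context {R : realType}.

Lemma sup_scale_le (A : set R) l M : A !=set0 -> has_ubound A -> 0 <= l ->
  (forall y, A y -> l * y <= M) -> l * sup A <= M.
Proof.
move=> [y0 Ay0] ubA l0 h.
have [le|lp] := eqVneq l 0.
  by move: (h _ Ay0); rewrite le !mul0r.
have lgt : 0 < l by rewrite lt_neqAle eq_sym lp l0.
rewrite mulrC -ler_pdivlMr //; apply: ge_sup; first by exists y0.
by move=> y Ay; rewrite ler_pdivlMr // mulrC; exact: h.
Qed.

Lemma sum_sqr0 n (p : 'I_n -> R) : \sum_i p i ^+ 2 <= 0 -> forall i, p i = 0.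
Proof.
move=> h i; have : p i ^+ 2 <= 0.
  apply: le_trans h; rewrite (bigD1 i) //= lerDl sumr_ge0 // => j _; exact: sqr_ge0.
by move=> h2; apply/eqP; rewrite -sqrf_eq0 eq_le h2 sqr_ge0.
Qed.

Lemma CS n (p q : 'I_n -> R) s r : 0 <= s -> 0 <= r ->
  \sum_i p i ^+ 2 <= s ^+ 2 -> \sum_i q i ^+ 2 <= r ^+ 2 ->
  \sum_i p i * q i <= s * r.
Proof.
move=> s0 r0 hp hq.
have [se|sp] := eqVneq s 0.
  rewrite se expr0n /= in hp; rewrite se; have p0 := sum_sqr0 hp.
  by rewrite big1 ?mul0r // => i _; rewrite p0 mul0r.
have [re|rp] := eqVneq r 0.
  rewrite re expr0n /= in hq; rewrite re; have q0 := sum_sqr0 hq.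
  by rewrite big1 ?mulr0 // => i _; rewrite q0 mulr0.
have sg : 0 < s by rewrite lt_neqAle eq_sym sp s0.
have rg : 0 < r by rewrite lt_neqAle eq_sym rp r0.
have key : 2 * (r * s) * \sum_i p i * q i <= r ^+ 2 * \sum_i p i ^+ 2 + s ^+ 2 * \sum_i q i ^+ 2.
  rewrite !mulr_sumr -big_split /=; apply: ler_sum => i _.
  have := sqr_ge0 (r * p i - s * q i); nra.
have : r ^+ 2 * \sum_i p i ^+ 2 + s ^+ 2 * \sum_i q i ^+ 2 <= 2 * (r * s) * (s * r).
  have := ler_wpM2l (sqr_ge0 r) hp; have := ler_wpM2l (sqr_ge0 s) hq; nra.
move: key; set X := \sum_i p i * q i => key h2.
have rs : 0 < 2 * (r * s) by rewrite mulr_gt0 // mulr_gt0.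
rewrite -(ler_pM2l rs); exact: le_trans key h2.
Qed.

End SupLemmas.

Section Sx.
Context {R : realType} {n : nat} (K : set 'rV[R]_n) (mu : 'rV[R]_n).
Hypothesis Kmu : K mu.
Hypothesis Kc : convex_set (K : set (convex_lmodType 'rV[R]_n)).

Definition Sset (x : 'rV[R]_n) (e : R) := [set inner x t | t in eball mu e `&` K].
Definition Sx (x : 'rV[R]_n) (e : R) := sup (Sset x e).
Definition l1 (x : 'rV[R]_n) := \sum_(i < n) `|x 0 i|.

Lemma l1_ge0 x : 0 <= l1 x.
Proof. by apply: sumr_ge0 => i _. Qed.

Lemma ball_mu e : 0 <= e -> eball mu e mu.
Proof.
move=> e0; split => //; rewrite big1 ?sqr_ge0 // => i _; by rewrite subrr expr0n.
Qed.

Lemma coord_le t e i : eball mu e t -> `|t 0 i - mu 0 i| <= e.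
Proof.
move=> [e0 h]; have : (t 0 i - mu 0 i) ^+ 2 <= e ^+ 2.
  apply: le_trans h; rewrite (bigD1 i) //= lerDl sumr_ge0 // => j _; exact: sqr_ge0.
rewrite -real_normK ?num_real // => h2.
rewrite leNgt; apply/negP => h3.
have a0 := normr_ge0 (t 0 i - mu 0 i); nra.
Qed.

Lemma coord_abs t e i : eball mu e t -> `|t 0 i| <= l1 mu + e.
Proof.
move=> bt; have := coord_le i bt => h.
have : `|mu 0 i| <= l1 mu.
  by rewrite /l1 (bigD1 i) //= lerDl sumr_ge0.
have := ler_normD (t 0 i - mu 0 i) (mu 0 i); rewrite subrK; lra.
Qed.

Lemma inner_ub x t e : eball mu e t -> inner x t <= inner x mu + e * l1 x.
Proof.
move=> bt.
have -> : inner x t = inner x mu + \sum_i x 0 i * (t 0 i - mu 0 i).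
  by rewrite /inner -big_split /=; apply: eq_bigr => i _; ring.
rewrite lerD2l /l1 mulr_sumr; apply: ler_sum => i _.
apply: le_trans (ler_norm _) _; rewrite normrM mulrC.
by apply: ler_wpM2r => //; exact: coord_le bt.
Qed.

Lemma Sset_n0 x e : 0 <= e -> Sset x e !=set0.
Proof. by move=> e0; exists (inner x mu), mu => //; split => //; exact: ball_mu. Qed.

Lemma Sset_ub x e : has_ubound (Sset x e).
Proof. by exists (inner x mu + e * l1 x) => y [t [bt _] <-]; exact: inner_ub. Qed.

Lemma Sx_ge x e : 0 <= e -> inner x mu <= Sx x e.
Proof.
move=> e0; apply: ub_le_sup; first exact: Sset_ub.
by exists mu => //; split => //; exact: ball_mu.
Qed.

Lemma Sx_le x e : 0 <= e -> Sx x e <= inner x mu + e * l1 x.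
Proof.
move=> e0; apply: ge_sup; first exact: Sset_n0.
by move=> y [t [bt _] <-]; exact: inner_ub.
Qed.

Lemma Sx_mono x a b : 0 <= a -> a <= b -> Sx x a <= Sx x b.
Proof.
move=> a0 ab; apply: ge_sup; first exact: Sset_n0.
move=> y [t [[_ bt] Kt] <-]; apply: ub_le_sup; first exact: Sset_ub.
exists t => //; split => //; split; first exact: le_trans ab.
apply: le_trans bt _; rewrite ler_sqr ?nnegrE //; exact: le_trans ab.
Qed.

Lemma inner_lip x y t e : eball mu e t ->
  inner x t <= inner y t + (l1 mu + e) * dist1 x y.
Proof.
move=> bt.
have -> : inner x t = inner y t + \sum_i (x 0 i - y 0 i) * t 0 i.
  by rewrite /inner -big_split /=; apply: eq_bigr => i _; ring.
rewrite lerD2l /dist1 mulr_sumr; apply: ler_sum => i _.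
apply: le_trans (ler_norm _) _; rewrite normrM mulrC.
by apply: ler_wpM2r => //; exact: coord_abs bt.
Qed.

Lemma dist1C m (x y : 'rV[R]_m) : dist1 x y = dist1 y x.
Proof. by apply: eq_bigr => i _; rewrite distrC. Qed.

Lemma Sx_lip1 x y e : 0 <= e -> Sx x e <= Sx y e + (l1 mu + e) * dist1 x y.
Proof.
move=> e0; apply: ge_sup; first exact: Sset_n0.
move=> z [t [bt Kt] <-]; apply: le_trans (inner_lip x y bt) _.
rewrite lerD2r; apply: ub_le_sup; first exact: Sset_ub.
by exists t.
Qed.

Lemma Sx_lip e : 0 <= e -> Lip (fun x => Sx x e).
Proof.
move=> e0; exists (l1 mu + e); split; first by rewrite addr_ge0 // l1_ge0.
move=> x y; have h1 := Sx_lip1 x y e0; have h2 := Sx_lip1 y x e0.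
rewrite dist1C in h2; rewrite ler_norml; lra.
Qed.


Lemma comb_ball t1 t2 a b l : 0 <= l -> l <= 1 -> eball mu a t1 -> eball mu b t2 ->
  eball mu (l * a + (1 - l) * b) (l *: t1 + (1 - l) *: t2).
Proof.
move=> l0 l1' [a0 h1] [b0 h2].
have l1'' : 0 <= 1 - l by lra.
split; first by rewrite addr_ge0 // mulr_ge0.
pose p i := l * (t1 0 i - mu 0 i).
pose q i := (1 - l) * (t2 0 i - mu 0 i).
have hp : \sum_i p i ^+ 2 <= (l * a) ^+ 2.
  rewrite /p; under eq_bigr do rewrite exprMn.
  by rewrite -mulr_sumr exprMn; apply: ler_wpM2l => //; exact: sqr_ge0.
have hq : \sum_i q i ^+ 2 <= ((1 - l) * b) ^+ 2.
  rewrite /q; under eq_bigr do rewrite exprMn.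
  by rewrite -mulr_sumr exprMn; apply: ler_wpM2l => //; exact: sqr_ge0.
have hpq := CS (mulr_ge0 l0 a0) (mulr_ge0 l1'' b0) hp hq.
have -> : \sum_i ((l *: t1 + (1 - l) *: t2) 0 i - mu 0 i) ^+ 2 =
    \sum_i p i ^+ 2 + 2 * \sum_i p i * q i + \sum_i q i ^+ 2.
  rewrite mulr_sumr -!big_split /=; apply: eq_bigr => i _.
  rewrite /p /q !mxE; ring.
move: hp hq hpq; set P := \sum_i p i ^+ 2; set Q := \sum_i q i ^+ 2;
  set PQ := \sum_i p i * q i => hp hq hpq.
nra.
Qed.

Lemma inner_comb (x t1 t2 : 'rV[R]_n) (l : R) :
  inner x (l *: t1 + (1 - l) *: t2) = l * inner x t1 + (1 - l) * inner x t2.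
Proof.
rewrite /inner !mulr_sumr -big_split /=; apply: eq_bigr => i _; rewrite !mxE; ring.
Qed.

Lemma Sx_conc x a b l : 0 <= a -> 0 <= b -> 0 <= l -> l <= 1 ->
  l * Sx x a + (1 - l) * Sx x b <= Sx x (l * a + (1 - l) * b).
Proof.
move=> a0 b0 l0 l1'.
have l1'' : 0 <= 1 - l by lra.
have c0 : 0 <= l * a + (1 - l) * b by rewrite addr_ge0 // mulr_ge0.
suff : (1 - l) * Sx x b <= Sx x (l * a + (1 - l) * b) - l * Sx x a by lra.
apply: sup_scale_le => //; first exact: Sset_n0; first exact: Sset_ub.
move=> y2 [t2 [bt2 Kt2] <-].
suff : l * Sx x a <= Sx x (l * a + (1 - l) * b) - (1 - l) * inner x t2 by lra.
apply: sup_scale_le => //; first exact: Sset_n0; first exact: Sset_ub.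
move=> y1 [t1 [bt1 Kt1] <-].
suff : l * inner x t1 + (1 - l) * inner x t2 <= Sx x (l * a + (1 - l) * b) by lra.
rewrite -inner_comb; apply: ub_le_sup; first exact: Sset_ub.
exists (l *: t1 + (1 - l) *: t2) => //; split; first exact: comb_ball.
have l1h : l <= 1 := l1'.
have := Kc (Itv01 l0 l1h) (mem_set Kt1) (mem_set Kt2).
by rewrite inE.
Qed.

End Sx.


Section W.
Context {R : realType} {n : nat} (K : set 'rV[R]_n) (mu : 'rV[R]_n).
Hypothesis Kmu : K mu.
Hypothesis Kc : convex_set (K : set (convex_lmodType 'rV[R]_n)).

Definition w (e : R) : R := GE (fun x => Sx K mu x e).
Definition Cn : R := GE (fun x : 'rV[R]_n => l1 x).

Lemma Lip_l1 : Lip (fun x : 'rV[R]_n => l1 x).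
Proof.
exists 1; split => // x y; rewrite mul1r.
have h1 : l1 x - l1 y <= dist1 x y.
  by rewrite /l1 /dist1 -sumrB; apply: ler_sum => i _; exact: lerB_dist.
have h2 : l1 y - l1 x <= dist1 x y.
  rewrite dist1C /l1 /dist1 -sumrB; apply: ler_sum => i _; exact: lerB_dist.
rewrite ler_norml; lra.
Qed.

Lemma Cn_ge0 : 0 <= Cn.
Proof. by have [_ _ pos _] := @GPn R n; apply: pos; [exact: Lip_l1|move=> x; exact: l1_ge0]. Qed.

Lemma w_fin e : 0 <= e -> local_gw K mu e = (w e)%:E.
Proof. by move=> e0; have [fin _ _ _] := @GPn R n; exact: fin (Sx_lip Kmu e0). Qed.

Lemma w_mono a b : 0 <= a -> a <= b -> w a <= w b.
Proof.
move=> a0 ab; have b0 : 0 <= b by exact: le_trans ab.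
have [_ lin pos _] := @GPn R n.
have h : 0 <= GE (fun x => -1 * Sx K mu x a + Sx K mu x b).
  apply: pos; first exact: Lip_lin (Sx_lip Kmu a0) (Sx_lip Kmu b0).
  by move=> x; have := Sx_mono Kmu x a0 ab; lra.
rewrite (lin _ _ _ (Sx_lip Kmu a0) (Sx_lip Kmu b0)) in h; rewrite /w; lra.
Qed.

Lemma w_conc a b l : 0 <= a -> 0 <= b -> 0 <= l -> l <= 1 ->
  l * w a + (1 - l) * w b <= w (l * a + (1 - l) * b).
Proof.
move=> a0 b0 l0 l1'.
have c0 : 0 <= l * a + (1 - l) * b by rewrite addr_ge0 // mulr_ge0 //; lra.
have [_ lin pos _] := @GPn R n.
have La := Sx_lip Kmu a0; have Lb := Sx_lip Kmu b0; have Lc := Sx_lip Kmu c0.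
have h : 0 <= GE (fun x => - l * Sx K mu x a + (- (1 - l) * Sx K mu x b + Sx K mu x (l * a + (1 - l) * b))).
  apply: pos; first by apply: Lip_lin La _; exact: Lip_lin.
  by move=> x; have := Sx_conc Kmu Kc x a0 b0 l0 l1'; lra.
rewrite lin // in h; last exact: Lip_lin.
rewrite lin // in h.
rewrite /w; lra.
Qed.

Lemma w_bound e : 0 <= e -> w e <= w 0 + e * Cn.
Proof.
move=> e0; have [_ lin pos _] := @GPn R n.
have L0 := Sx_lip Kmu (lexx (0:R)); have Le := Sx_lip Kmu e0.
have h : 0 <= GE (fun x => -1 * Sx K mu x e + (e * l1 x + Sx K mu x 0)).
  apply: pos; first by apply: Lip_lin Le _; exact: Lip_lin Lip_l1 L0.
  move=> x; have := Sx_le Kmu x e0; have := Sx_ge Kmu x (lexx (0:R)).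
  lra.
rewrite lin // in h; last exact: Lip_lin Lip_l1 L0.
rewrite lin // in h; last exact: Lip_l1.
rewrite /w /Cn; lra.
Qed.

End W.


Section Abstract.
Context {R : realType}.
Variables (w : R -> R) (C : R).
Hypothesis C0 : 0 <= C.
Hypothesis wm : forall a b, 0 <= a -> a <= b -> w a <= w b.
Hypothesis wc : forall a b l, 0 <= a -> 0 <= b -> 0 <= l -> l <= 1 ->
  l * w a + (1 - l) * w b <= w (l * a + (1 - l) * b).
Hypothesis wb : forall e, 0 <= e -> w e <= w 0 + e * C.

Definition fm s e := s * w e - e ^+ 2 / 2.
Definition ismax s e := 0 <= e /\ forall e', 0 <= e' -> fm s e' <= fm s e.

Lemma ismax_bound s e : 0 <= s -> ismax s e -> e <= 2 * s * C.
Proof.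
move=> s0 [e0 h]; have := h 0 (lexx _); rewrite /fm => h0.
have := ler_wpM2l s0 (wb e0) => h1.
rewrite expr0n /= mul0r subr0 in h0.
rewrite mulrDr in h1.
have h2 : e ^+ 2 <= 2 * s * C * e.
  have -> : 2 * s * C * e = 2 * (s * (e * C)) by ring.
  lra.
have t0 : 0 <= 2 * s * C by rewrite mulr_ge0 // mulr_ge0.
move: h2 t0; set t := 2 * s * C => h2 t0.
rewrite leNgt; apply/negP => h3.
have ep : 0 < e by exact: le_lt_trans h3.
nra.
Qed.

Lemma w_lip a b : 0 <= a -> a <= b -> w b - w a <= C * (b - a).
Proof.
move=> a0 ab; have b0 : 0 <= b by exact: le_trans ab.
have [be|bp] := eqVneq b 0.
  have ae : a = 0 by apply/eqP; rewrite eq_le a0 andbT -be.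
  by rewrite be ae !subrr mulr0.
have bg : 0 < b by rewrite lt_neqAle eq_sym bp b0.
pose l := a / b.
have l0 : 0 <= l by rewrite divr_ge0.
have l1 : l <= 1 by rewrite ler_pdivrMr // mul1r.
have := wc b0 (lexx 0) l0 l1.
have -> : l * b + (1 - l) * 0 = a.
  by rewrite mulr0 addr0 /l divfK // gt_eqF.
have := wb b0.
have e1 : 1 - l = (b - a) / b by rewrite /l; field; rewrite gt_eqF.
move=> h1 h2.
have h3 : w b - w a <= (1 - l) * (w b - w 0) by lra.
have h4 : (1 - l) * (w b - w 0) <= (1 - l) * (b * C) by apply: ler_wpM2l; lra.
have e2 : (1 - l) * (b * C) = C * (b - a) by rewrite e1; field; rewrite gt_eqF.
lra.
Qed.

Definition clamp M (x : R) := if x < 0 then 0 else if M < x then M else x.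

Lemma clamp_lip M x y : 0 <= M -> `|clamp M x - clamp M y| <= `|x - y|.
Proof.
move=> M0; have h1 := ler_norm (x - y).
have h2 : y - x <= `|x - y| by rewrite distrC ler_norm.
rewrite ler_norml /clamp; apply/andP.
case: (ltP x 0) => hx; case: (ltP M x) => hx'; case: (ltP y 0) => hy;
  case: (ltP M y) => hy'; split; lra.
Qed.

Lemma clamp_range M x : 0 <= M -> 0 <= clamp M x /\ clamp M x <= M.
Proof. by move=> M0; rewrite /clamp; case: (ltP x 0) => hx; case: (ltP M x) => hx'; split; lra. Qed.

Lemma clamp_id M x : 0 <= x -> x <= M -> clamp M x = x.
Proof. by move=> x0 xM; rewrite /clamp; case: (ltP x 0) => hx; case: (ltP M x) => hx'; lra. Qed.

Lemma w_abs x y : 0 <= x -> 0 <= y -> `|w x - w y| <= C * `|x - y|.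
Proof.
move=> x0 y0.
have n1 : x - y <= `|x - y| := ler_norm (x - y).
have n2 : y - x <= `|x - y| by rewrite -normrN opprB ler_norm.
have c1 := ler_wpM2l C0 n1; have c2 := ler_wpM2l C0 n2.
have Cn : 0 <= C * `|x - y| by rewrite mulr_ge0.
rewrite ler_norml; apply/andP.
have [xy|yx] := lerP x y.
  have h1 := w_lip x0 xy; have h2 := wm x0 xy.
  split; nra.
have yx' := ltW yx; have h1 := w_lip y0 yx'; have h2 := wm y0 yx'.
split; nra.
Qed.

Lemma ismax_ex s : 0 <= s -> exists e, ismax s e.
Proof.
move=> s0; set M := 2 * s * C.
have M0 : 0 <= M by rewrite /M mulr_ge0 // mulr_ge0.
pose h e := s * w (clamp M e) - (clamp M e) ^+ 2 / 2.
have hc : continuous h.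
  apply: (@lip_cont _ h (s * C + M)); first by rewrite addr_ge0 // mulr_ge0.
  move=> y x; have [cx0 cxM] := clamp_range x M0; have [cy0 cyM] := clamp_range y M0.
  have hw := w_abs cx0 cy0; have hcl := clamp_lip x y M0.
  have e1 : h x - h y = s * (w (clamp M x) - w (clamp M y)) -
      (clamp M x - clamp M y) * (clamp M x + clamp M y) / 2 by rewrite /h; ring.
  rewrite e1; apply: le_trans (ler_normB _ _) _.
  have i2 : 0 <= (2:R)^-1 by rewrite invr_ge0.
  rewrite normrM (ger0_norm s0) normrM (ger0_norm i2) normrM.
  rewrite (ger0_norm (addr_ge0 cx0 cy0)).
  set d := `|clamp M x - clamp M y|.
  have d0 : 0 <= d by exact: normr_ge0.
  have h1 : s * `|w (clamp M x) - w (clamp M y)| <= s * (C * d) by apply: ler_wpM2l.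
  have h2 : d * (clamp M x + clamp M y) / 2 <= d * M.
    rewrite ler_pdivrMr //; rewrite -mulrA; apply: ler_wpM2l => //; lra.
  have h3 : (s * C + M) * d <= (s * C + M) * `|x - y|.
    by apply: ler_wpM2l => //; rewrite addr_ge0 // mulr_ge0.
  have : s * (C * d) + d * M = (s * C + M) * d by ring.
  lra.
have [c cin hmax] := EVT_max M0 (continuous_subspaceT hc).
move: (cin); rewrite in_itv /= => /andP [c0 cM].
exists c; split => // e' e0.
have hcE : h c = fm s c by rewrite /h /fm clamp_id.
have [e'M|Me'] := lerP e' M.
  have := hmax e'; rewrite in_itv /= e0 e'M /= => /(_ isT).
  by rewrite hcE /h clamp_id.
have := hmax 0; rewrite in_itv /= lexx M0 /= => /(_ isT).
rewrite hcE /h clamp_id ?lexx // => h0.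
apply: le_trans h0; rewrite /fm expr0n /= mul0r subr0.
have := ler_wpM2l s0 (wb e0); rewrite mulrDr.
have : s * (e' * C) <= e' ^+ 2 / 2.
  have : 2 * s * C * e' <= e' * e' by apply: ler_wpM2r => //; exact: ltW.
  have -> : s * (e' * C) = 2 * s * C * e' / 2 by field.
  rewrite expr2; lra.
lra.
Qed.


Lemma ismax_mono s1 s2 e1 e2 : 0 <= s1 -> s1 < s2 -> ismax s1 e1 -> ismax s2 e2 ->
  e1 <= e2.
Proof.
move=> s10 s12 [e10 h1] [e20 h2]; rewrite leNgt; apply/negP => lt.
have A := h1 e2 e20; have B := h2 e1 e10; rewrite /fm in A B.
have W := wm e20 (ltW lt).
have D0 : w e1 = w e2.
  apply/eqP; rewrite eq_le W andbT.
  have : (s2 - s1) * (w e1 - w e2) <= 0.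
    have -> : (s2 - s1) * (w e1 - w e2) =
      (s2 * w e1 - s2 * w e2) - (s1 * w e1 - s1 * w e2) by ring.
    lra.
  rewrite pmulr_rle0 ?subr_gt0 //; lra.
rewrite D0 in A.
have P2 : e2 ^+ 2 < e1 ^+ 2 by rewrite ltr_pXn2r // ?nnegrE.
lra.
Qed.

Lemma conc4 p q r t : 0 <= p -> p <= q -> q <= r -> r <= t -> q - p = t - r ->
  w p + w t <= w q + w r.
Proof.
move=> p0 pq qr rt e.
have [pt|pt] := eqVneq p t.
  have qp : q = p by lra.
  have rp : r = p by lra.
  by rewrite qp rp pt.
have tp : 0 < t - p by rewrite subr_gt0 lt_neqAle pt /=; lra.
pose l := (t - q) / (t - p).
have l0 : 0 <= l by rewrite divr_ge0 //; lra.
have l1 : l <= 1 by rewrite ler_pdivrMr // mul1r; lra.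
have l0' : 0 <= 1 - l by lra.
have l1' : 1 - l <= 1 by lra.
have t0 : 0 <= t by lra.
have h1 := wc p0 t0 l0 l1.
have h2 := wc p0 t0 l0' l1'.
have eq1 : l * p + (1 - l) * t = q by rewrite /l; field; rewrite gt_eqF.
have eq2 : (1 - l) * p + (1 - (1 - l)) * t = r.
  have -> : r = t - q + p by lra.
  by rewrite /l; field; rewrite gt_eqF.
rewrite eq1 in h1; rewrite eq2 in h2.
lra.
Qed.

Lemma ismax_scale s k a b : 0 < s -> 1 <= k -> ismax s a -> ismax (k * s) b ->
  b <= k * a.
Proof.
move=> s0 k1 [a0 ha] [b0 hb]; rewrite leNgt; apply/negP => lt.
have k0 : 0 < k by lra.
pose d := (b - k * a) / (1 + k).
have dk : d * (1 + k) = b - k * a by rewrite /d divfK // gt_eqF //; lra.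
have d0 : 0 < d by rewrite /d divr_gt0 //; lra.
have ka : a <= k * a by rewrite ler_peMl.
have qr : a + d <= b - d.
  have : 0 <= (k - 1) * (a + b) by rewrite mulr_ge0 //; lra.
  nra.
have H1 := ha (a + d) (addr_ge0 a0 (ltW d0)).
have H2 := hb (b - d) (le_trans (addr_ge0 a0 (ltW d0)) qr).
rewrite /fm in H1 H2.
have C4 : w a + w b <= w (a + d) + w (b - d).
  apply: conc4 => //; [lra|lra|ring].
set X := w b - w (b - d); set Y := w (a + d) - w a.
have XY : X <= Y by rewrite /X /Y; lra.
have E1 : s * Y <= d * (2 * a + d) / 2.
  have -> : s * Y = s * w (a + d) - s * w a by rewrite /Y; ring.
  have -> : d * (2 * a + d) / 2 = (a + d) ^+ 2 / 2 - a ^+ 2 / 2 by ring.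
  lra.
have E2 : d * (2 * b - d) / 2 <= k * s * X.
  have -> : k * s * X = k * s * w b - k * s * w (b - d) by rewrite /X; ring.
  have -> : d * (2 * b - d) / 2 = b ^+ 2 / 2 - (b - d) ^+ 2 / 2 by ring.
  lra.
have E3 : k * s * X <= k * s * Y by apply: ler_wpM2l => //; rewrite mulr_ge0 //; lra.
have E4 : k * (s * Y) <= k * (d * (2 * a + d) / 2) by apply: ler_wpM2l => //; lra.
have E5 : d * ((2 * b - d) - k * (2 * a + d)) <= 0.
  have -> : d * ((2 * b - d) - k * (2 * a + d)) =
    2 * (d * (2 * b - d) / 2) - 2 * (k * (d * (2 * a + d) / 2)) by field.
  rewrite -mulrA in E3.
  lra.
rewrite pmulr_rle0 // in E5.
have eb : b = d * (1 + k) + k * a by lra.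
rewrite eb in lt.
nra.
Qed.

End Abstract.


Section Main.
Context {R : realType} {n : nat} (K : set 'rV[R]_n).
Hypothesis Kc : convex_set (K : set (convex_lmodType 'rV[R]_n)).

Local Notation WM Kmu := (@w_mono R n K _ Kmu).
Local Notation WC Kmu := (@w_conc R n K _ Kmu Kc).
Local Notation WB Kmu := (@w_bound R n K _ Kmu).
Local Notation C0 := (@Cn_ge0 R n).

Lemma is_epsE mu s e : K mu -> is_eps_mu K mu s e <-> ismax (w K mu) s e.
Proof.
move=> Kmu; split => [[e0 h]|[e0 h]]; split => // e' e'0.
  by have := h e' e'0; rewrite !w_fin // -!EFinM -!EFinB lee_fin.
by rewrite !w_fin // -!EFinM -!EFinB lee_fin; exact: h.
Qed.

Definition S s := [set e | exists2 mu, K mu & is_eps_mu K mu s e].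

Lemma S_prop s e : 0 <= s -> S s e -> 0 <= e /\ e <= 2 * s * @Cn R n.
Proof.
move=> s0 [mu Kmu /(is_epsE _ _ Kmu) h]; split; first by case: h.
have := @ismax_bound R (w K mu) (@Cn R n) (@Cn_ge0 R n) (@w_bound R n K _ Kmu) s e s0 h. by [].
Qed.

Lemma S_ub s : 0 <= s -> has_ubound (S s).
Proof. by move=> s0; exists (2 * s * @Cn R n) => e Se; have [] := S_prop s0 Se. Qed.

Lemma S_sup_ge0 s : 0 <= s -> 0 <= sup (S s).
Proof.
move=> s0; case: (pselect (S s !=set0)) => [[e Se]|ne].
  apply: le_trans (ub_le_sup (S_ub s0) Se); by have [] := S_prop s0 Se.
have -> : S s = set0.
  by apply/seteqP; split => // e Se; apply: ne; exists e.
by rewrite sup0.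
Qed.

Lemma S_ex s mu : 0 <= s -> K mu -> exists e, is_eps_mu K mu s e.
Proof.
move=> s0 Kmu; have [e h] := ismax_ex C0 (WM Kmu) (WC Kmu) (WB Kmu) s0.
by exists e; apply/(is_epsE _ _ Kmu).
Qed.

Lemma S_mono s1 s2 : 0 <= s1 -> s1 <= s2 -> sup (S s1) <= sup (S s2).
Proof.
move=> s10 s12; have s20 : 0 <= s2 by exact: le_trans s12.
have [e12|ne] := eqVneq s1 s2; first by rewrite e12.
have lt : s1 < s2 by rewrite lt_neqAle ne s12.
case: (pselect (S s1 !=set0)) => [ne1|e1]; last first.
  have -> : S s1 = set0.
    by apply/seteqP; split => // e Se; apply: e1; exists e.
  by rewrite sup0; exact: S_sup_ge0.
apply: ge_sup; first exact: ne1.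
move=> e [mu Kmu h].
have [e2 h2] := S_ex s20 Kmu.
have le := ismax_mono (WM Kmu) s10 lt (proj1 (is_epsE _ _ Kmu) h) (proj1 (is_epsE _ _ Kmu) h2).
apply: le_trans le (ub_le_sup (S_ub s20) _); by exists mu.
Qed.

Lemma S_scale_up sg c : 0 <= sg -> 1 <= c -> sup (S (c * sg)) <= c * sup (S sg).
Proof.
move=> sg0 c1; have c0 : 0 <= c by lra.
have csg0 : 0 <= c * sg by rewrite mulr_ge0.
have [e0|ne] := eqVneq sg 0.
  rewrite e0 mulr0; have := S_sup_ge0 (lexx (0:R)); nra.
have sgp : 0 < sg by rewrite lt_neqAle eq_sym ne sg0.
case: (pselect (S (c * sg) !=set0)) => [ne1|e1]; last first.
  have -> : S (c * sg) = set0.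
    by apply/seteqP; split => // e Se; apply: e1; exists e.
  by rewrite sup0; apply: mulr_ge0 => //; exact: S_sup_ge0.
apply: ge_sup; first exact: ne1.
move=> e2 [mu Kmu h2].
have [e1 h1] := S_ex sg0 Kmu.
have le := ismax_scale (WC Kmu) sgp c1 (proj1 (is_epsE _ _ Kmu) h1) (proj1 (is_epsE _ _ Kmu) h2).
apply: le_trans le _; apply: ler_wpM2l => //.
apply: ub_le_sup; first exact: S_ub sg0.
by exists mu.
Qed.

Lemma S_scale_down sg c : 0 <= sg -> 0 <= c -> c < 1 -> c * sup (S sg) <= sup (S (c * sg)).
Proof.
move=> sg0 c0 c1; have csg0 : 0 <= c * sg by rewrite mulr_ge0.
have [ce|cn] := eqVneq c 0.
  by rewrite ce !mul0r; exact: S_sup_ge0.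
have [e0|ne] := eqVneq sg 0.
  rewrite e0 mulr0; have := S_sup_ge0 (lexx (0:R)); nra.
have sgp : 0 < sg by rewrite lt_neqAle eq_sym ne sg0.
have cp : 0 < c by rewrite lt_neqAle eq_sym cn c0.
case: (pselect (S sg !=set0)) => [ne1|e1]; last first.
  have -> : S sg = set0.
    by apply/seteqP; split => // e Se; apply: e1; exists e.
  by rewrite sup0 mulr0; exact: S_sup_ge0.
apply: sup_scale_le => //; first exact: S_ub.
move=> e1 [mu Kmu h1].
have [e2 h2] := S_ex csg0 Kmu.
have ci : 1 <= c^-1 by rewrite invf_ge1 //; exact: ltW.
have csgp : 0 < c * sg by rewrite mulr_gt0.
have h1' : ismax (w K mu) (c^-1 * (c * sg)) e1.
  by rewrite mulrA mulVf ?mul1r ?gt_eqF //; exact: (proj1 (is_epsE _ _ Kmu) h1).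
have le := ismax_scale (WC Kmu) csgp ci (proj1 (is_epsE _ _ Kmu) h2) h1'.
have : c * e1 <= e2.
  have ip : 0 < c^-1 by rewrite invr_gt0.
  by rewrite -(ler_pM2l ip) mulrA mulVf ?mul1r ?gt_eqF.
move=> h; apply: le_trans h _.
apply: ub_le_sup; first exact: S_ub csg0.
by exists mu.
Qed.

End Main.

Unset Implicit Arguments.
Theorem mainTheorem20 (R : realType) (n : nat) (K : set 'rV[R]_n)
  (K_closed : closed K)
  (K_convex : convex_set (K : set (convex_lmodType 'rV[R]_n))) :
  (forall s1 s2 : R, 0 <= s1 -> s1 <= s2 -> eps_bar K s1 <= eps_bar K s2) /\
  (forall sigma c : R, 0 <= sigma -> 1 <= c ->
     eps_bar K sigma <= eps_bar K (c * sigma) /\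
     eps_bar K (c * sigma) <= c * eps_bar K sigma) /\
  (forall sigma c : R, 0 <= sigma -> 0 <= c -> c < 1 ->
     c * eps_bar K sigma <= eps_bar K (c * sigma) /\
     eps_bar K (c * sigma) <= eps_bar K sigma).
Proof.
split; [|split].
- move=> s1 s2 h0 h1; exact: (S_mono K_convex h0 h1).
- move=> sg c h0 h1; split.
    by apply: (S_mono K_convex h0); rewrite ler_peMl.
  exact: (S_scale_up K_convex h0 h1).
- move=> sg c h0 hc0 hc1; split.
    exact: (S_scale_down K_convex h0 hc0 hc1).
  apply: (S_mono K_convex); first by rewrite mulr_ge0.
  by rewrite ler_piMl // ltW.
Qed.
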